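(* Let $I$ be a nontrivial ideal of $\mathbb{N}\times\mathbb{N}$ containing all sets of the form $H\times\mathbb{N}$ with $H$ a finite subset of $\mathbb{N}$. If $(X,\tau)$ is $I$-sequentially compact in the sense of double sequences, then $(X,\tau)$ is countably compact.
   Context: An ideal $I$ on $\mathbb{N}\times\mathbb{N}$ is a family of subsets closed under finite unions and under taking subsets; it is nontrivial if $I\ne\{\emptyset\}$ and $\mathbb{N}\times\mathbb{N}\notin I$. $y\in X$ is an $I$-cluster point of a double sequence $\{x_{ij}\}$ in $X$ if for every open $U\ni y$, $\{(m,n)\in\mathbb{N}\times\mathbb{N}: x_{mn}\in U\}\notin I$. $(X,\tau)$ is $I$-sequentially compact in the sense of double sequences if every double sequence in $X$ has an $I$-cluster point. *)

(* Defs.v *)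
From Stdlib Require Import Classical.

Definition set (T : Type) := T -> Prop.

Record topology (X : Type) := {
  is_open : set X -> Prop;
  open_full : is_open (fun _ => True);
  open_empty : is_open (fun _ => False);
  open_inter : forall U V, is_open U -> is_open V -> is_open (fun x => U x /\ V x);
  open_union : forall (F : set X -> Prop),
      (forall U, F U -> is_open U) -> is_open (fun x => exists U, F U /\ U x)
}.
Arguments is_open {X} t U.

Definition is_ideal (I : set (nat * nat) -> Prop) : Prop :=
  I (fun _ => False) /\
  (forall A B, I A -> I B -> I (fun p => A p \/ B p)) /\
  (forall A B, (forall p, B p -> A p) -> I A -> I B).

Definition nontrivial_ideal (I : set (nat * nat) -> Prop) : Prop :=
  is_ideal I /\
  (exists A, I A /\ exists p, A p) /\   (* I <> {emptyset} *)
  ~ I (fun _ => True).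

Definition finite_nat (H : set nat) : Prop := exists n, forall k, H k -> k < n.

Definition I_cluster_point {X : Type} (t : topology X) (I : set (nat * nat) -> Prop)
    (x : nat -> nat -> X) (y : X) : Prop :=
  forall U, is_open t U -> U y -> ~ I (fun p => U (x (fst p) (snd p))).

Definition I_seq_compact_double {X : Type} (t : topology X) (I : set (nat * nat) -> Prop) :=
  forall x : nat -> nat -> X, exists y, I_cluster_point t I x y.

Definition countably_compact {X : Type} (t : topology X) : Prop :=
  forall U : nat -> set X,
    (forall n, is_open t (U n)) ->
    (forall x, exists n, U n x) ->
    exists N, forall x, exists n, n <= N /\ U n x.

(* Main.v *)
Require Import Defs.
From Stdlib Require Import Classical Lia ClassicalEpsilon.

Theorem theorem4p4 (I : set (nat * nat) -> Prop) (X : Type) (t : topology X) :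
  nontrivial_ideal I ->
  (forall H : set nat, finite_nat H -> I (fun p => H (fst p))) ->
  I_seq_compact_double t I ->
  countably_compact t.
Proof.
  intros [[_ [_ Hsub]] _] HH Hc U Uo Ucov.
  apply NNPP; intro Hn.
  assert (Hx : forall N, exists x, forall n, n <= N -> ~ U n x).
  { intro N. apply NNPP; intro H1. apply Hn. exists N. intro x.
    apply NNPP; intro H2. apply H1. exists x. intros n Hle Hu. apply H2. eauto. }
  destruct (Hc (fun m _ => proj1_sig (constructive_indefinite_description _ (Hx m)))) as [y Hy].
  destruct (Ucov y) as [k Hk].
  apply (Hy (U k) (Uo k) Hk).
  apply (Hsub (fun p => (fun m => m < k) (fst p))).
  - intros [m n] Hp. simpl in *.
    destruct (constructive_indefinite_description _ (Hx m)) as [xm Hxm]. simpl in Hp.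
    destruct (Compare_dec.lt_dec m k) as [Hl|Hl]; [exact Hl|assert (Hl2 : k <= m) by lia].
    exfalso. exact (Hxm k Hl2 Hp).
  - apply (HH (fun m => m < k)). exists k. auto.
Qed.
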